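(* For all sufficiently large $K>0$ the following hold: for every $x\in X$, $\mathcal L_x(\Lambda_K^x)\subset\Lambda_{\zeta K}^{fx}$; and there is a constant $M=M(K)<\infty$ such that for every $x\in X$, the diameter of $\mathcal L_x(\Lambda_K^x)$ with respect to the Hilbert projective metric of the cone $\Lambda_K^{fx}$ is at most $M$.
   Context: Standing setting. $X$ and $Y$ are compact connected Riemannian manifolds, $X\times Y$ has the metric $d((x,y),(x',y'))=d_X(x,x')+d_Y(y,y')$. $F(x,y)=(f(x),g_x(y))$ is a skew product which is a Lipschitz local homeomorphism; $Y_x=\{x\}\times Y$ is identified with $Y$. $f$ is uniformly expanding: there are $\gamma>1$, $\delta_f>0$ with $d_X(fx,fx')\ge\gamma d_X(x,x')$ whenever $d_X(x,x')\le\delta_f$. Every $y$ has exactly $d$ preimages under each $g_x$. There is a continuous function $L(\cdot,\cdot)$ such that each $z$ has a neighbourhood $U_z$ on which $F$ is injective and the inverse of $F|_{U_z}$ is $L(z)$-Lipschitz on $F(U_z)$. There are $L\ge1$ and open $\mathcal A\subset X\times Y$ with: (A1) $L(z)\le L$ on $\mathcal A$ and $L(z)<\gamma^{-1}$ off $\mathcal A$; (A2) a finite cover $\mathcal U$ of $X\times Y$ by open sets on which $F$ is injective, with $\mathcal A$ covered by $q<d$ elements of $\mathcal U$ and each element of $\mathcal U$ meeting at most one curve of $F^{-1}(c)$ for every distance-minimizing geodesic $c$. The potential $\varphi$ is $\alpha$-Hölder ($0<\alpha<1$), $|\varphi|_\alpha=\sup_{z\ne z'}|\varphi(z)-\varphi(z')|/d(z,z')^\alpha$,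 satisfying (P): $\sup\varphi-\inf\varphi<\varepsilon_\varphi$ and $|e^\varphi|_\alpha<\varepsilon_\varphi e^{\inf\varphi}$, where $\varepsilon_\varphi>0$ satisfies $s:=e^{\varepsilon_\varphi}\frac{(d-q)\gamma^{-\alpha}+qL^\alpha}{d}<1$ and $\zeta:=s+2s\varepsilon_\varphi\,\mathrm{diam}(Y)^\alpha<1$. Fiberwise operator: $\mathcal L_x\colon C(Y_x)\to C(Y_{fx})$, $\mathcal L_x\psi(y)=\sum_{\bar y\in g_x^{-1}(y)}e^{\varphi(x,\bar y)}\psi(\bar y)$. Cones: for $K>0$ and $x\in X$, $\Lambda_K^x=\{\psi\colon Y_x\to(0,\infty)\ \alpha\text{-Hölder}: |\psi|_\alpha\le K\inf\psi\}\cup\{0\}$. For a cone $\Lambda$, write $\phi\preceq\psi$ iff $\psi-\phi\in\Lambda\cup\{0\}$; $A(\phi,\psi)=\sup\{t>0:t\phi\preceq\psi\}$, $B(\phi,\psi)=\inf\{t>0:\psi\preceq t\phi\}$, and the Hilbert projective metric is $\Theta(\phi,\psi)=\log(B/A)$. *)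

(* Defs.v *)
From Stdlib Require Import Reals Lra List.
From Coquelicot Require Import Coquelicot.
Open Scope R_scope.
Set Implicit Arguments.

Definition metric_space {T : Type} (dist : T -> T -> R) : Prop :=
  (forall x y, 0 <= dist x y) /\
  (forall x y, dist x y = 0 <-> x = y) /\
  (forall x y, dist x y = dist y x) /\
  (forall x y z, dist x z <= dist x y + dist y z).

Definition open_in {T : Type} (dist : T -> T -> R) (U : T -> Prop) : Prop :=
  forall x, U x -> exists e, 0 < e /\ forall y, dist x y < e -> U y.

Definition seq_converges {T : Type} (dist : T -> T -> R) (u : nat -> T) (l : T) : Prop :=
  forall e, 0 < e -> exists N, forall n, (N <= n)%nat -> dist (u n) l < e.

(* sequential compactness (equivalent to compactness for metric spaces) *)
Definition compact_space {T : Type} (dist : T -> T -> R) : Prop :=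
  forall u : nat -> T, exists (phi : nat -> nat) (l : T),
    (forall n, (phi n < phi (S n))%nat) /\ seq_converges dist (fun n => u (phi n)) l.

Definition connected_space {T : Type} (dist : T -> T -> R) : Prop :=
  forall U V : T -> Prop, open_in dist U -> open_in dist V ->
    (forall x, U x -> V x -> False) -> (forall x, U x \/ V x) ->
    (forall x, U x) \/ (forall x, V x).

Definition cont_at {S T : Type} (dS : S -> S -> R) (dT : T -> T -> R) (h : S -> T) (x : S) : Prop :=
  forall e, 0 < e -> exists de, 0 < de /\ forall y, dS x y < de -> dT (h x) (h y) < e.

Definition lipschitz {S T : Type} (dS : S -> S -> R) (dT : T -> T -> R) (h : S -> T) : Prop :=
  exists C, forall x y, dT (h x) (h y) <= C * dS x y.

Definition in01 (t : R) : Prop := 0 <= t <= 1.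

Definition min_geodesic {T : Type} (dist : T -> T -> R) (c : R -> T) : Prop :=
  forall s t, in01 s -> in01 t -> dist (c s) (c t) = Rabs (s - t) * dist (c 0) (c 1).

Definition geodesic_space {T : Type} (dist : T -> T -> R) : Prop :=
  forall a b, exists c : R -> T, min_geodesic dist c /\ c 0 = a /\ c 1 = b.

(* x^a with the convention 0^a = 0 (a > 0 throughout) *)
Definition rpow (x a : R) : R := if Rlt_dec 0 x then Rpower x a else 0.

Definition prod_dist {X Y : Type} (dX : X -> X -> R) (dY : Y -> Y -> R)
  (z z' : X * Y) : R := dX (fst z) (fst z') + dY (snd z) (snd z').

Definition skewF {X Y : Type} (f : X -> X) (g : X -> Y -> Y) (z : X * Y) : X * Y :=
  (f (fst z), g (fst z) (snd z)).

Definition sup_fun {T : Type} (h : T -> R) : Rbar := Lub_Rbar (fun r => exists z, r = h z).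
Definition inf_fun {T : Type} (h : T -> R) : Rbar := Glb_Rbar (fun r => exists z, r = h z).

Definition diam {T : Type} (dist : T -> T -> R) : R :=
  real (Lub_Rbar (fun r => exists a b, r = dist a b)).

Definition holder {T : Type} (dist : T -> T -> R) (alpha : R) (h : T -> R) : Prop :=
  exists C, forall z z', z <> z' -> Rabs (h z - h z') <= C * rpow (dist z z') alpha.

Definition holder_semi {T : Type} (dist : T -> T -> R) (alpha : R) (h : T -> R) : Rbar :=
  Lub_Rbar (fun r => exists z z', z <> z' /\ r = Rabs (h z - h z') / rpow (dist z z') alpha).

Definition cont_on01 {T : Type} (dist : T -> T -> R) (c : R -> T) : Prop :=
  forall t, in01 t -> forall e, 0 < e -> exists de, 0 < de /\
    forall t', in01 t' -> Rabs (t - t') < de -> dist (c t) (c t') < e.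

(* a curve of F^{-1}(c): a continuous lift of c through F on [0,1] *)
Definition lift_of {X Y : Type} (dX : X -> X -> R) (dY : Y -> Y -> R)
  (f : X -> X) (g : X -> Y -> Y) (c gm : R -> X * Y) : Prop :=
  cont_on01 (prod_dist dX dY) gm /\ forall t, in01 t -> skewF f g (gm t) = c t.

Definition s_const (d q : nat) (gamma Lc alpha eps : R) : R :=
  exp eps * ((INR d - INR q) * rpow gamma (- alpha) + INR q * rpow Lc alpha) / INR d.

Definition zeta_const {Y : Type} (dY : Y -> Y -> R) (d q : nat) (gamma Lc alpha eps : R) : R :=
  s_const d q gamma Lc alpha eps
  + 2 * s_const d q gamma Lc alpha eps * eps * rpow (diam dY) alpha.

Record Setting {X Y : Type} (dX : X -> X -> R) (dY : Y -> Y -> R)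
  (f : X -> X) (g : X -> Y -> Y) (d : nat) (preim : X -> Y -> list Y)
  (Lz : X * Y -> R) (gamma deltaf Lc : R) (A : X * Y -> Prop)
  (N : nat) (Ucov : nat -> X * Y -> Prop) (q : nat) (Aidx : list nat)
  (alpha : R) (phi : X * Y -> R) (eps : R) : Prop := {
  sX_metric : metric_space dX;
  sY_metric : metric_space dY;
  sX_compact : compact_space dX;
  sY_compact : compact_space dY;
  sX_connected : connected_space dX;
  sY_connected : connected_space dY;
  sX_geodesic : geodesic_space dX;
  sY_geodesic : geodesic_space dY;
  sF_lip : lipschitz (prod_dist dX dY) (prod_dist dX dY) (skewF f g);
  sF_localhomeo : forall z, exists U : X * Y -> Prop,
      open_in (prod_dist dX dY) U /\ U z /\
      (forall w w', U w -> U w' -> skewF f g w = skewF f g w' -> w = w') /\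
      open_in (prod_dist dX dY) (fun v => exists w, U w /\ v = skewF f g w) /\
      (forall w, U w -> forall e, 0 < e -> exists de, 0 < de /\
          forall w', U w' -> prod_dist dX dY (skewF f g w) (skewF f g w') < de ->
             prod_dist dX dY w w' < e);
  s_gamma : 1 < gamma;
  s_deltaf : 0 < deltaf;
  s_expanding : forall x x', dX x x' <= deltaf -> gamma * dX x x' <= dX (f x) (f x');
  s_preim : forall x y, NoDup (preim x y) /\ length (preim x y) = d /\
      (forall y', g x y' = y <-> In y' (preim x y));
  sL_cont : forall z, cont_at (prod_dist dX dY) (fun a b => Rabs (a - b)) Lz z;
  sL_branch : forall z, exists U : X * Y -> Prop,
      open_in (prod_dist dX dY) U /\ U z /\
      (forall w w', U w -> U w' -> skewF f g w = skewF f g w' -> w = w') /\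
      (forall w w', U w -> U w' ->
         prod_dist dX dY w w' <= Lz z * prod_dist dX dY (skewF f g w) (skewF f g w'));
  s_Lc : 1 <= Lc;
  s_A_open : open_in (prod_dist dX dY) A;
  s_A1_in : forall z, A z -> Lz z <= Lc;
  s_A1_out : forall z, ~ A z -> Lz z < / gamma;
  s_U_open : forall i, (i < N)%nat -> open_in (prod_dist dX dY) (Ucov i);
  s_U_inj : forall i, (i < N)%nat -> forall w w', Ucov i w -> Ucov i w' ->
      skewF f g w = skewF f g w' -> w = w';
  s_U_cover : forall z, exists i, (i < N)%nat /\ Ucov i z;
  s_Aidx : NoDup Aidx /\ length Aidx = q /\ (forall i, In i Aidx -> (i < N)%nat);
  s_A_cov : forall z, A z -> exists i, In i Aidx /\ Ucov i z;
  s_q : (q < d)%nat;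
  s_geod_lift : forall i, (i < N)%nat -> forall c : R -> X * Y,
      min_geodesic (prod_dist dX dY) c ->
      forall g1 g2 : R -> X * Y,
        lift_of dX dY f g c g1 -> lift_of dX dY f g c g2 ->
        (exists t, in01 t /\ Ucov i (g1 t)) -> (exists t, in01 t /\ Ucov i (g2 t)) ->
        forall t, in01 t -> g1 t = g2 t;
  s_alpha : 0 < alpha < 1;
  s_phi_holder : holder (prod_dist dX dY) alpha phi;
  s_eps : 0 < eps;
  s_P1 : Rbar_lt (Rbar_minus (sup_fun phi) (inf_fun phi)) (Finite eps);
  s_P2 : Rbar_lt (holder_semi (prod_dist dX dY) alpha (fun z => exp (phi z)))
                 (Finite (eps * exp (real (inf_fun phi))));
  s_s : s_const d q gamma Lc alpha eps < 1;
  s_zeta : zeta_const dY d q gamma Lc alpha eps < 1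
}.

Definition Lop {X Y : Type} (preim : X -> Y -> list Y) (phi : X * Y -> R)
  (x : X) (psi : Y -> R) : Y -> R :=
  fun y => fold_right (fun yb acc => exp (phi (x, yb)) * psi yb + acc) 0 (preim x y).

Definition cone {Y : Type} (dY : Y -> Y -> R) (alpha K : R) (psi : Y -> R) : Prop :=
  ((forall y, 0 < psi y) /\ holder dY alpha psi /\
     Rbar_le (holder_semi dY alpha psi) (Rbar_mult (Finite K) (inf_fun psi)))
  \/ (forall y, psi y = 0).

Definition cone_le {Y : Type} (Lam : (Y -> R) -> Prop) (p1 p2 : Y -> R) : Prop :=
  Lam (fun y => p2 y - p1 y) \/ (forall y, p2 y - p1 y = 0).

Definition hA {Y : Type} (Lam : (Y -> R) -> Prop) (p1 p2 : Y -> R) : Rbar :=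
  Lub_Rbar (fun t => 0 < t /\ cone_le Lam (fun y => t * p1 y) p2).

Definition hB {Y : Type} (Lam : (Y -> R) -> Prop) (p1 p2 : Y -> R) : Rbar :=
  Glb_Rbar (fun t => 0 < t /\ cone_le Lam p2 (fun y => t * p1 y)).

Definition hilbert_theta {Y : Type} (Lam : (Y -> R) -> Prop) (p1 p2 : Y -> R) : Rbar :=
  match hA Lam p1 p2, hB Lam p1 p2 with
  | Finite a, Finite b =>
      if Rlt_dec 0 a then if Rlt_dec 0 b then Finite (ln (b / a)) else p_infty
      else p_infty
  | _, _ => p_infty
  end.

(* Main.v *)
Require Import Defs.
From Stdlib Require Import Reals List Lra Lia Permutation Classical ClassicalEpsilon.
From Coquelicot Require Import Coquelicot.
Open Scope R_scope.


Lemma rpow_pos x a : 0 < x -> 0 < rpow x a.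
Proof. intros. unfold rpow. destruct (Rlt_dec 0 x); [apply exp_pos|lra]. Qed.
Lemma rpow_nonneg x a : 0 <= rpow x a.
Proof. unfold rpow. destruct (Rlt_dec 0 x); [left; apply exp_pos|lra]. Qed.
Lemma rpow_zero a : rpow 0 a = 0.
Proof. unfold rpow. destruct (Rlt_dec 0 0); lra. Qed.
Lemma rpow_le x y a : 0 <= x <= y -> 0 <= a -> rpow x a <= rpow y a.
Proof. intros Hx Ha. unfold rpow. destruct (Rlt_dec 0 x), (Rlt_dec 0 y).
 - apply Rle_Rpower_l; lra.
 - lra.
 - left; apply exp_pos.
 - lra. Qed.
Lemma rpow_mul x y a : 0 <= x -> 0 <= y -> rpow (x*y) a = rpow x a * rpow y a.
Proof. intros Hx Hy. destruct Hx as [Hx|Hx]; [|subst; rewrite Rmult_0_l, rpow_zero; lra].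
 destruct Hy as [Hy|Hy]; [|subst; rewrite Rmult_0_r, rpow_zero; lra].
 unfold rpow. destruct (Rlt_dec 0 (x*y)), (Rlt_dec 0 x), (Rlt_dec 0 y); try nra.
 rewrite Rpower_mult_distr; auto. Qed.
Lemma rpow_inv x a : 0 < x -> rpow (/x) a = rpow x (-a).
Proof. intros. unfold rpow. destruct (Rlt_dec 0 (/x)), (Rlt_dec 0 x); try lra.
 - unfold Rpower. rewrite ln_Rinv by lra. f_equal; ring.
 - exfalso. apply n. apply Rinv_0_lt_compat; lra. Qed.

Lemma lub_fin (E : R -> Prop) x0 b : E x0 -> (forall x, E x -> x <= b) ->
  Lub_Rbar E = Finite (real (Lub_Rbar E)) /\ (forall x, E x -> x <= real (Lub_Rbar E)) /\
  (forall c, (forall x, E x -> x <= c) -> real (Lub_Rbar E) <= c).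
Proof. intros H0 Hb. destruct (Lub_Rbar_correct E) as [ub lub].
 destruct (Lub_Rbar E) as [r| |] eqn:He.
 - split; [reflexivity|]. split.
   + intros x Hx. exact (ub x Hx).
   + intros c Hc. exact (lub (Finite c) Hc).
 - exfalso. exact (lub (Finite b) Hb).
 - exfalso. exact (ub x0 H0). Qed.

Lemma glb_fin (E : R -> Prop) x0 b : E x0 -> (forall x, E x -> b <= x) ->
  Glb_Rbar E = Finite (real (Glb_Rbar E)) /\ (forall x, E x -> real (Glb_Rbar E) <= x) /\
  (forall c, (forall x, E x -> c <= x) -> c <= real (Glb_Rbar E)).
Proof. intros H0 Hb. destruct (Glb_Rbar_correct E) as [lb glb].
 destruct (Glb_Rbar E) as [r| |] eqn:He.
 - split; [reflexivity|]. split.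
   + intros x Hx. exact (lb x Hx).
   + intros c Hc. exact (glb (Finite c) Hc).
 - exfalso. exact (lb x0 H0).
 - exfalso. exact (glb (Finite b) Hb). Qed.

Lemma lub_elem (E : R -> Prop) x : E x -> Rbar_le x (Lub_Rbar E).
Proof. intros. destruct (Lub_Rbar_correct E) as [ub _]. exact (ub x H). Qed.
Lemma lub_le (E : R -> Prop) b : (forall x, E x -> x <= b) -> Rbar_le (Lub_Rbar E) (Finite b).
Proof. intros. destruct (Lub_Rbar_correct E) as [_ lub]. apply lub. exact H. Qed.
Lemma glb_elem (E : R -> Prop) x : E x -> Rbar_le (Glb_Rbar E) x.
Proof. intros. destruct (Glb_Rbar_correct E) as [lb _]. exact (lb x H). Qed.

Section Met.
Context {T : Type} (dist : T -> T -> R) (Hm : metric_space dist).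

Lemma md_nonneg a b : 0 <= dist a b. Proof. apply Hm. Qed.
Lemma md_refl a : dist a a = 0. Proof. apply Hm; reflexivity. Qed.
Lemma md_sym a b : dist a b = dist b a. Proof. apply Hm. Qed.
Lemma md_tri a b c : dist a c <= dist a b + dist b c. Proof. apply Hm. Qed.
Lemma md_eq a b : dist a b = 0 -> a = b. Proof. apply Hm. Qed.
Lemma md_pos a b : a <> b -> 0 < dist a b.
Proof. intros. destruct (md_nonneg a b) as [|E]; auto. exfalso; apply H, md_eq; auto. Qed.

Lemma holder_semi_bound a h C : Rbar_le (holder_semi dist a h) (Finite C) ->
  forall z z', Rabs (h z - h z') <= C * rpow (dist z z') a.
Proof. intros HC z z'. destruct (classic (z = z')) as [E|E].
 - subst. rewrite md_refl, rpow_zero, Rminus_diag, Rabs_R0. lra.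
 - assert (Hp := rpow_pos (dist z z') a (md_pos _ _ E)).
   assert (Hl := lub_elem (fun r => exists z z', z <> z' /\ r = Rabs (h z - h z') / rpow (dist z z') a)
     (Rabs (h z - h z') / rpow (dist z z') a) (ex_intro _ z (ex_intro _ z' (conj E eq_refl)))).
   fold (holder_semi dist a h) in Hl.
   assert (Hr := Rbar_le_trans _ _ _ Hl HC). simpl in Hr.
   apply Rmult_le_reg_r with (/ rpow (dist z z') a). apply Rinv_0_lt_compat; auto.
   rewrite Rmult_assoc, Rinv_r by lra. rewrite Rmult_1_r. exact Hr. Qed.

Lemma holder_semi_le a h C : (forall z z', z <> z' -> Rabs (h z - h z') <= C * rpow (dist z z') a) ->
  Rbar_le (holder_semi dist a h) (Finite C).
Proof. intros H. apply lub_le. intros r [z [z' [E ->]]].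
 assert (Hp := rpow_pos (dist z z') a (md_pos _ _ E)).
 specialize (H z z' E). apply Rmult_le_reg_r with (rpow (dist z z') a); auto.
 unfold Rdiv. rewrite Rmult_assoc, Rinv_l by lra. lra. Qed.

End Met.

Lemma incr_mono (phi : nat -> nat) : (forall n, (phi n < phi (S n))%nat) ->
  forall a b, (a < b)%nat -> (phi a < phi b)%nat.
Proof. intros H a b Hab. induction Hab. apply H. specialize (H m). lia. Qed.
Lemma incr_ge (phi : nat -> nat) : (forall n, (phi n < phi (S n))%nat) -> forall n, (n <= phi n)%nat.
Proof. intros H n. induction n. lia. specialize (H n). lia. Qed.

Lemma choice_fun {A B : Type} (P : A -> B -> Prop) : (forall a, exists b, P a b) ->
  exists h : A -> B, forall a, P a (h a).
Proof. intros H. exists (fun a => proj1_sig (constructive_indefinite_description _ (H a))).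
 intros a. exact (proj2_sig (constructive_indefinite_description _ (H a))). Qed.

Section Met.
Context {T : Type} (dist : T -> T -> R) (Hm : metric_space dist) (Hc : compact_space dist).

Lemma compact_bounded (y0 : T) : exists B, forall a b, dist a b <= B.
Proof.
 destruct (classic (exists n : nat, forall u, dist y0 u <= INR n)) as [[n Hn]|Hn].
 - exists (2 * INR n). intros a b. pose proof (md_tri dist Hm a y0 b).
   rewrite (md_sym dist Hm a y0) in H. pose proof (Hn a). pose proof (Hn b). lra.
 - assert (H : forall n : nat, exists u, INR n < dist y0 u).
   { intros n. apply NNPP; intro C. apply Hn. exists n. intros u. apply Rnot_lt_le.
     intro C'. apply C. eauto. }
   destruct (choice_fun _ H) as [u Hu].
   destruct (Hc u) as [phi [l [Hphi Hconv]]].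
   destruct (Hconv 1 Rlt_0_1) as [N HN].
   destruct (INR_unbounded (dist y0 l + 1)) as [n0 Hn0].
   set (n := max N n0).
   specialize (HN n ltac:(lia)). specialize (Hu (phi n)).
   assert (INR n0 <= INR (phi n)). { apply le_INR. pose proof (incr_ge phi Hphi n). lia. }
   pose proof (md_tri dist Hm y0 l (u (phi n))). rewrite (md_sym dist Hm l) in H1. lra.
Qed.

Lemma diam_prop (y0 : T) : 0 <= diam dist /\ forall a b, dist a b <= diam dist.
Proof.
 destruct (compact_bounded y0) as [B HB].
 destruct (lub_fin (fun r => exists a b, r = dist a b) (dist y0 y0) B) as [_ [H1 _]].
 - eauto.
 - intros x [a [b ->]]. auto.
 - unfold diam. split.
   + specialize (H1 (dist y0 y0) ltac:(eauto)). rewrite (md_refl dist Hm) in H1. exact H1.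
   + intros a b. apply H1. eauto.
Qed.
End Met.

Lemma subseq_conv {T} (dist : T -> T -> R) (u : nat -> T) l (phi : nat -> nat) :
  (forall n, (phi n < phi (S n))%nat) -> seq_converges dist u l -> seq_converges dist (fun n => u (phi n)) l.
Proof. intros Hp Hc e He. destruct (Hc e He) as [N HN]. exists N. intros n Hn.
 apply HN. pose proof (incr_ge phi Hp n). lia. Qed.

Lemma prod_metric {X Y} (dX : X -> X -> R) (dY : Y -> Y -> R) :
  metric_space dX -> metric_space dY -> metric_space (prod_dist dX dY).
Proof. intros HX HY. unfold prod_dist. split; [|split; [|split]].
 - intros x y. pose proof (md_nonneg dX HX (fst x) (fst y)). pose proof (md_nonneg dY HY (snd x) (snd y)). lra.
 - intros x y. split.
   + intros H. pose proof (md_nonneg dX HX (fst x) (fst y)). pose proof (md_nonneg dY HY (snd x) (snd y)).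
     destruct x, y; simpl in *. f_equal; [apply (md_eq dX HX)|apply (md_eq dY HY)]; lra.
   + intros ->. rewrite (md_refl dX HX), (md_refl dY HY). lra.
 - intros x y. rewrite (md_sym dX HX), (md_sym dY HY). reflexivity.
 - intros x y z. pose proof (md_tri dX HX (fst x) (fst y) (fst z)). pose proof (md_tri dY HY (snd x) (snd y) (snd z)). lra.
Qed.

Lemma prod_compact {X Y} (dX : X -> X -> R) (dY : Y -> Y -> R) :
  compact_space dX -> compact_space dY -> compact_space (prod_dist dX dY).
Proof. intros HX HY u.
 destruct (HX (fun n => fst (u n))) as [p1 [lx [Hp1 Hc1]]].
 destruct (HY (fun n => snd (u (p1 n)))) as [p2 [ly [Hp2 Hc2]]].
 exists (fun n => p1 (p2 n)), (lx, ly). split.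
 - intros n. apply incr_mono; auto.
 - intros e He. destruct (subseq_conv _ _ _ _ Hp2 Hc1 (e/2) ltac:(lra)) as [N1 H1].
   destruct (Hc2 (e/2) ltac:(lra)) as [N2 H2]. exists (max N1 N2). intros n Hn.
   unfold prod_dist; simpl. specialize (H1 n ltac:(lia)). specialize (H2 n ltac:(lia)). simpl in *. lra.
Qed.

Lemma cont_ind (G : R -> Prop) : G 0 ->
  (forall T, 0 <= T <= 1 -> (forall de, 0 < de -> exists t', 0 <= t' <= T /\ T - de < t' /\ G t') ->
     exists e, 0 < e /\ G (Rmin 1 (T + e))) -> G 1.
Proof. intros G0 H.
 set (E := fun t => 0 <= t <= 1 /\ G t).
 destruct (completeness E) as [m [Hub Hlub]].
 - exists 1. intros t [Ht _]. lra.
 - exists 0. split; [lra|auto].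
 - assert (Hm0 : 0 <= m) by (apply Hub; split; [lra|auto]).
   assert (Hm1 : m <= 1) by (apply Hlub; intros t [Ht _]; lra).
   destruct (H m (conj Hm0 Hm1)) as [e [He Ge]].
   + intros de Hde. apply NNPP. intro C.
     assert (m <= m - de). { apply Hlub. intros t Et. apply Rnot_lt_le. intro C2. apply C.
       exists t. destruct Et as [Et Gt]. repeat split; try lra; auto. apply Hub; split; auto. }
     lra.
   + unfold Rmin in *. destruct (Rle_dec 1 (m + e)); auto.
     assert (m + e <= m) by (apply Hub; split; [lra|auto]). lra.
Qed.

Lemma cont_ind_pt (P : R -> Prop) : P 0 ->
  (forall T, 0 <= T <= 1 -> exists de, 0 < de /\ forall t', 0 <= t' <= T -> T - de < t' ->
     (forall s, 0 <= s <= t' -> P s) -> forall s, 0 <= s <= 1 -> Rabs (s - T) < de -> P s) ->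
  forall s, 0 <= s <= 1 -> P s.
Proof. intros P0 H.
 assert (G1 : forall s, 0 <= s <= 1 -> P s); [|exact G1].
 apply (cont_ind (fun t => forall s, 0 <= s <= t -> P s)).
 - intros s Hs. replace s with 0 by lra. auto.
 - intros T HT Hpre. destruct (H T HT) as [de [Hde Hst]].
   destruct (Hpre de Hde) as [t' [Ht' [Ht'2 Gt']]].
   exists (de/2). split; [lra|]. intros s Hs.
   destruct (Rle_dec s t') as [Hle|Hgt]. apply Gt'; lra.
   apply (Hst t' Ht' Ht'2 Gt'). unfold Rmin in Hs; destruct (Rle_dec 1 (T + de/2)); lra.
   unfold Rmin in Hs; destruct (Rle_dec 1 (T + de/2)); apply Rabs_def1; lra.
Qed.

Lemma cont_ind_lc (P : R -> Prop) : P 0 ->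
  (forall T, 0 <= T <= 1 -> exists de, 0 < de /\ forall s, 0 <= s <= 1 -> Rabs (s - T) < de -> (P s <-> P T)) ->
  forall s, 0 <= s <= 1 -> P s.
Proof. intros P0 H. apply cont_ind_pt; auto.
 intros T HT. destruct (H T HT) as [de [Hde Hl]]. exists de. split; auto.
 intros t' Ht' Ht'2 Gt' s Hs Hst. apply (Hl s Hs Hst). apply (Hl t'). lra.
 apply Rabs_def1; lra. apply Gt'; lra.
Qed.

Definition cont_upto {T : Type} (dist : T -> T -> R) (u : R) (gm : R -> T) : Prop :=
  forall t, 0 <= t <= u -> forall e, 0 < e -> exists de, 0 < de /\
    forall t', 0 <= t' <= u -> Rabs (t - t') < de -> dist (gm t) (gm t') < e.

Lemma zero_small a : 0 <= a -> (forall e, 0 < e -> a < e) -> a = 0.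
Proof. intros Ha He. destruct Ha as [Ha|Ha]; auto. specialize (He a Ha). lra. Qed.

Lemma inv_small (de : R) : 0 < de -> exists n1 : nat, forall k, (n1 <= k)%nat -> / INR (S k) < de.
Proof. intros Hde. destruct (INR_unbounded (/ de)) as [n1 Hn1]. exists n1. intros k Hk.
 assert (INR n1 <= INR k) by (apply le_INR; lia). rewrite S_INR.
 assert (0 < /de) by (apply Rinv_0_lt_compat; lra).
 rewrite <- (Rinv_inv de). apply Rinv_lt_contravar. nra. lra. Qed.

Section Lift.
Context {X Y : Type} {dX : X -> X -> R} {dY : Y -> Y -> R}
  {f : X -> X} {g : X -> Y -> Y} {d : nat} {preim : X -> Y -> list Y}
  {Lz : X * Y -> R} {gamma deltaf Lc : R} {A : X * Y -> Prop}
  {N : nat} {Ucov : nat -> X * Y -> Prop} {q : nat} {Aidx : list nat}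
  {alpha : R} {phi : X * Y -> R} {eps : R}
  (H : Setting dX dY f g d preim Lz gamma deltaf Lc A N Ucov q Aidx alpha phi eps).

Local Notation dZ := (prod_dist dX dY).
Local Notation F := (skewF f g).

Lemma Zm : metric_space dZ.
Proof. apply prod_metric; [apply (sX_metric H)|apply (sY_metric H)]. Qed.
Lemma Zc : compact_space dZ.
Proof. apply prod_compact; [apply (sX_compact H)|apply (sY_compact H)]. Qed.

Lemma F_lip : exists C, 0 <= C /\ forall a b, dZ (F a) (F b) <= C * dZ a b.
Proof. destruct (sF_lip H) as [C HC]. exists (Rmax C 0). split. apply Rmax_r.
 intros a b. specialize (HC a b). pose proof (md_nonneg _ Zm a b).
 assert (C * dZ a b <= Rmax C 0 * dZ a b) by (apply Rmult_le_compat_r; [lra|apply Rmax_l]). lra. Qed.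

Lemma loc_inv (w : X * Y) : exists (U : X * Y -> Prop) r rho (G : X * Y -> X * Y),
  U w /\ 0 < r /\ 0 < rho /\
  (forall u, dZ w u < r -> U u) /\
  (forall u u', U u -> U u' -> F u = F u' -> u = u') /\
  (forall v, dZ (F w) v < rho -> U (G v) /\ F (G v) = v) /\
  (forall v, dZ (F w) v < rho -> forall e, 0 < e -> exists de, 0 < de /\
      forall v', dZ (F w) v' < rho -> dZ v v' < de -> dZ (G v) (G v') < e).
Proof.
 destruct (sF_localhomeo H w) as [U [HUo [HUw [Hinj [HFUo Hcont]]]]].
 destruct (HUo w HUw) as [r [Hr Hball]].
 destruct (HFUo (F w) (ex_intro _ w (conj HUw eq_refl))) as [rho [Hrho Hball2]].
 assert (Hch : forall v, exists u, (exists u0, U u0 /\ v = F u0) -> U u /\ F u = v).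
 { intros v. destruct (classic (exists u0, U u0 /\ v = F u0)) as [[u0 [Hu0 ->]]|Hn].
   - exists u0. auto.
   - exists w. intro C; contradiction. }
 destruct (choice_fun _ Hch) as [G HG].
 exists U, r, rho, G. split; [auto|split; [auto|split; [auto|split; [auto|split; [auto|split]]]]].
 - intros v Hv. apply HG. apply Hball2. exact Hv.
 - intros v Hv e He. destruct (HG v (Hball2 v Hv)) as [HGv HFv].
   destruct (Hcont (G v) HGv e He) as [de [Hde Hd]]. exists de. split; auto.
   intros v' Hv' Hvv'. destruct (HG v' (Hball2 v' Hv')) as [HGv' HFv'].
   apply Hd; auto. rewrite HFv, HFv'. exact Hvv'.
Qed.


Lemma lift_exists (c : R -> X * Y) (L : R) (HL : 0 <= L)
  (Hc : forall s t, 0 <= s <= 1 -> 0 <= t <= 1 -> dZ (c s) (c t) <= L * Rabs (s - t))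
  (w0 : X * Y) (Hw0 : F w0 = c 0) :
  exists gm, gm 0 = w0 /\ cont_upto dZ 1 gm /\ forall t, 0 <= t <= 1 -> F (gm t) = c t.
Proof.
 apply (cont_ind (fun u => exists gm, gm 0 = w0 /\ cont_upto dZ u gm /\ forall t, 0 <= t <= u -> F (gm t) = c t)).
 - exists (fun _ => w0). split; [reflexivity|split].
   + intros t Ht e He. exists 1. split; [lra|]. intros. rewrite (md_refl _ Zm). lra.
   + intros t Ht. replace t with 0 by lra. auto.
 - intros T HT Hpre.
   assert (Hn : forall n : nat, exists p : R * (R -> X * Y), 0 <= fst p <= T /\ T - / INR (S n) < fst p /\
     (snd p) 0 = w0 /\ cont_upto dZ (fst p) (snd p) /\ forall t, 0 <= t <= fst p -> F (snd p t) = c t).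
   { intros n. assert (0 < / INR (S n)) by (apply Rinv_0_lt_compat, lt_0_INR; lia).
     destruct (Hpre _ H0) as [t' [Ht' [Ht'2 [gm [G0 [Gc GF]]]]]].
     exists (t', gm). simpl. auto. }
   destruct (choice_fun _ Hn) as [pf Hpf].
   set (tn := fun n => fst (pf n)). set (gn := fun n => snd (pf n)).
   destruct (Zc (fun n => gn n (tn n))) as [ph [ws [Hph Hconv]]].
   destruct F_lip as [C [HC0 HC]].
   assert (HFws : F ws = c T).
   { apply (md_eq _ Zm). apply zero_small. apply (md_nonneg _ Zm). intros e He.
     destruct (Hconv (e / 2 / (C + 1))) as [N1 HN1]. apply Rdiv_lt_0_compat; lra.
     destruct (inv_small (e / 2 / (L + 1))) as [n1 Hn1]. apply Rdiv_lt_0_compat; lra.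
     set (k := ph (max N1 n1)).
     specialize (HN1 (max N1 n1) ltac:(lia)). simpl in HN1. fold k in HN1.
     assert (Hk : (n1 <= k)%nat). { pose proof (incr_ge ph Hph (max N1 n1)). unfold k; lia. }
     specialize (Hn1 k Hk). destruct (Hpf k) as [Hk1 [Hk2 [_ [_ HkF]]]]. fold (tn k) in *. fold (gn k) in *.
     pose proof (md_tri _ Zm (F ws) (F (gn k (tn k))) (c T)) as Htri.
     rewrite HkF in Htri by lra.
     pose proof (HC ws (gn k (tn k))). rewrite (md_sym _ Zm ws) in H0. rewrite HkF in H0 by lra.
     pose proof (Hc (tn k) T ltac:(lra) HT).
     assert (C * dZ (gn k (tn k)) ws <= C * (e/2/(C+1))) by (apply Rmult_le_compat_l; lra).
     assert (C * (e/2/(C+1)) < e/2). { unfold Rdiv. rewrite <- Rmult_assoc.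
        apply Rmult_lt_reg_r with (C+1). lra. rewrite Rmult_assoc, Rinv_l by lra. nra. }
     assert (Rabs (tn k - T) <= e/2/(L+1)) by (rewrite Rabs_left1 by lra; lra).
     assert (L * Rabs (tn k - T) <= L * (e/2/(L+1))) by (apply Rmult_le_compat_l; lra).
     assert (L * (e/2/(L+1)) < e/2). { unfold Rdiv. rewrite <- Rmult_assoc.
        apply Rmult_lt_reg_r with (L+1). lra. rewrite Rmult_assoc, Rinv_l by lra. nra. }
     lra. }
   destruct (loc_inv ws) as [U [r [rho [G [HUw [Hr [Hrho [HUball [Hinj [HG HGc]]]]]]]]]].
   set (dc := rho / (L + 1)).
   assert (Hdc : 0 < dc) by (apply Rdiv_lt_0_compat; lra).
   assert (K1 : forall t, 0 <= t <= 1 -> Rabs (t - T) < dc -> dZ (F ws) (c t) < rho).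
   { intros t Ht Htt. rewrite HFws. pose proof (Hc T t HT Ht). rewrite Rabs_minus_sym in Htt.
     assert (L * Rabs (T - t) <= L * dc) by (apply Rmult_le_compat_l; lra).
     assert (L * dc < rho). { unfold dc, Rdiv. rewrite <- Rmult_assoc.
        apply Rmult_lt_reg_r with (L+1). lra. rewrite Rmult_assoc, Rinv_l by lra. nra. }
     lra. }
   assert (Hcc : forall t, 0 <= t <= 1 -> Rabs (t - T) < dc -> forall e, 0 < e -> exists de, 0 < de /\
      forall t'', 0 <= t'' <= 1 -> Rabs (t'' - T) < dc -> Rabs (t - t'') < de -> dZ (G (c t)) (G (c t'')) < e).
   { intros t Ht Htt e He. destruct (HGc (c t) (K1 t Ht Htt) e He) as [de1 [Hde1 Hd1]].
     exists (de1 / (L + 1)). split. apply Rdiv_lt_0_compat; lra.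
     intros t'' Ht'' Ht''T Htt''. apply Hd1. apply K1; auto.
     pose proof (Hc t t'' Ht Ht'').
     assert (L * Rabs (t - t'') <= L * (de1 / (L+1))) by (apply Rmult_le_compat_l; lra).
     assert (L * (de1/(L+1)) < de1). { unfold Rdiv. rewrite <- Rmult_assoc.
        apply Rmult_lt_reg_r with (L+1). lra. rewrite Rmult_assoc, Rinv_l by lra. nra. }
     lra. }
   destruct (Hconv r Hr) as [N1 HN1].
   destruct (inv_small dc Hdc) as [n1 Hn1].
   set (k := ph (max N1 n1)).
   specialize (HN1 (max N1 n1) ltac:(lia)). simpl in HN1. fold k in HN1.
   assert (Hk : (n1 <= k)%nat). { pose proof (incr_ge ph Hph (max N1 n1)). unfold k; lia. }
   specialize (Hn1 k Hk). destruct (Hpf k) as [Hk1 [Hk2 [Hk0 [Hkc HkF]]]].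
   fold (tn k) in *. fold (gn k) in *.
   set (t' := tn k) in *. set (gm' := gn k) in *.
   assert (HUk : U (gm' t')). { apply HUball. rewrite (md_sym _ Zm). exact HN1. }
   assert (K2 : G (c t') = gm' t').
   { assert (Rabs (t' - T) < dc) by (rewrite Rabs_left1 by lra; lra).
     destruct (HG (c t') (K1 t' ltac:(lra) H0)) as [HU1 HF1].
     apply Hinj; auto. rewrite HF1, HkF; auto. lra. }
   exists (dc / 2). split; [lra|].
   set (u := Rmin 1 (T + dc/2)).
   assert (Hu : u <= 1 /\ u <= T + dc/2 /\ T <= u).
   { unfold u, Rmin. destruct (Rle_dec 1 (T + dc/2)); lra. }
   assert (Hin : forall t, 0 <= t <= u -> t' < t -> 0 <= t <= 1 /\ Rabs (t - T) < dc).
   { intros t Ht Htt. split; [lra|]. apply Rabs_def1; lra. }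
   exists (fun t => if Rle_dec t t' then gm' t else G (c t)). split; [|split].
   + simpl. destruct (Rle_dec 0 t'); [exact Hk0|lra].
   + intros t Ht e He. destruct (Rle_dec t t') as [Hle|Hgt].
     * destruct (Hkc t (conj (proj1 Ht) Hle) e He) as [de1 [Hde1 Hd1]].
       destruct (Rlt_dec t t') as [Hlt|Heq].
       -- exists (Rmin de1 (t' - t)). split. apply Rmin_pos; lra.
          intros t'' Ht'' Htt''. pose proof (Rmin_l de1 (t'-t)). pose proof (Rmin_r de1 (t'-t)).
          assert (t'' < t') by (apply Rabs_def2 in Htt''; lra).
          destruct (Rle_dec t'' t'); [|lra]. apply Hd1; lra.
       -- assert (t = t') by lra. subst t.
          assert (Rabs (t' - T) < dc) by (rewrite Rabs_left1 by lra; lra).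
          destruct (Hcc t' ltac:(lra) H0 e He) as [de2 [Hde2 Hd2]].
          exists (Rmin de1 de2). split. apply Rmin_pos; lra.
          intros t'' Ht'' Htt''. pose proof (Rmin_l de1 de2). pose proof (Rmin_r de1 de2).
          destruct (Rle_dec t'' t'). apply Hd1; lra.
          rewrite <- K2. destruct (Hin t'' Ht'') as [Hi1 Hi2]. lra. apply Hd2; auto. lra.
     * destruct (Hin t Ht) as [Hi1 Hi2]. lra.
       destruct (Hcc t Hi1 Hi2 e He) as [de2 [Hde2 Hd2]].
       exists (Rmin de2 (t - t')). split. apply Rmin_pos; lra.
       intros t'' Ht'' Htt''. pose proof (Rmin_l de2 (t-t')). pose proof (Rmin_r de2 (t-t')).
       assert (t' < t'') by (apply Rabs_def2 in Htt''; lra).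
       destruct (Rle_dec t'' t'); [lra|]. destruct (Hin t'' Ht'') as [Hj1 Hj2]. lra.
       apply Hd2; auto. lra.
   + intros t Ht. destruct (Rle_dec t t'). apply HkF; lra.
     destruct (Hin t Ht) as [Hi1 Hi2]. lra. apply (HG (c t) (K1 t Hi1 Hi2)).
Qed.

End Lift.

Section Lift2.
Context {X Y : Type} {dX : X -> X -> R} {dY : Y -> Y -> R}
  {f : X -> X} {g : X -> Y -> Y} {d : nat} {preim : X -> Y -> list Y}
  {Lz : X * Y -> R} {gamma deltaf Lc : R} {A : X * Y -> Prop}
  {N : nat} {Ucov : nat -> X * Y -> Prop} {q : nat} {Aidx : list nat}
  {alpha : R} {phi : X * Y -> R} {eps : R}
  (H : Setting dX dY f g d preim Lz gamma deltaf Lc A N Ucov q Aidx alpha phi eps).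

Local Notation dZ := (prod_dist dX dY).
Local Notation F := (skewF f g).

Lemma lift_lc (c : R -> X * Y) g1 g2 :
  cont_upto dZ 1 g1 -> cont_upto dZ 1 g2 ->
  (forall t, 0 <= t <= 1 -> F (g1 t) = c t) -> (forall t, 0 <= t <= 1 -> F (g2 t) = c t) ->
  forall s0, 0 <= s0 <= 1 -> exists de, 0 < de /\ forall s, 0 <= s <= 1 -> Rabs (s - s0) < de ->
    (g1 s = g2 s <-> g1 s0 = g2 s0).
Proof. intros C1 C2 F1 F2 s0 Hs0.
 destruct (classic (g1 s0 = g2 s0)) as [E|E].
 - destruct (loc_inv H (g1 s0)) as [U [r [rho [G [HUw [Hr [_ [HUb [Hinj _]]]]]]]]].
   destruct (C1 s0 Hs0 r Hr) as [d1 [Hd1 D1]]. destruct (C2 s0 Hs0 r Hr) as [d2 [Hd2 D2]].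
   exists (Rmin d1 d2). split. apply Rmin_pos; auto. intros s Hs Hss.
   pose proof (Rmin_l d1 d2). pose proof (Rmin_r d1 d2). rewrite Rabs_minus_sym in Hss.
   split; auto. intros _. apply Hinj. apply HUb, D1; auto; lra.
   apply HUb. rewrite E. apply D2; auto; lra. rewrite F1, F2; auto.
 - assert (Hp := md_pos _ (Zm H) _ _ E). set (eta := dZ (g1 s0) (g2 s0)) in *.
   destruct (C1 s0 Hs0 (eta/2) ltac:(lra)) as [d1 [Hd1 D1]]. destruct (C2 s0 Hs0 (eta/2) ltac:(lra)) as [d2 [Hd2 D2]].
   exists (Rmin d1 d2). split. apply Rmin_pos; auto. intros s Hs Hss.
   pose proof (Rmin_l d1 d2). pose proof (Rmin_r d1 d2). rewrite Rabs_minus_sym in Hss.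
   split; [|intro; contradiction]. intro Es. exfalso.
   specialize (D1 s Hs ltac:(lra)). specialize (D2 s Hs ltac:(lra)).
   pose proof (md_tri _ (Zm H) (g1 s0) (g1 s) (g2 s0)). rewrite Es in H2, D1.
   rewrite (md_sym _ (Zm H) (g2 s)) in H2. fold eta in H2. lra.
Qed.

Lemma lift_unique_end (c : R -> X * Y) g1 g2 :
  cont_upto dZ 1 g1 -> cont_upto dZ 1 g2 ->
  (forall t, 0 <= t <= 1 -> F (g1 t) = c t) -> (forall t, 0 <= t <= 1 -> F (g2 t) = c t) ->
  g1 1 = g2 1 -> g1 0 = g2 0.
Proof. intros C1 C2 F1 F2 E1.
 assert (K : forall t, 0 <= t <= 1 -> g1 (1 - t) = g2 (1 - t)).
 { apply cont_ind_lc. replace (1 - 0) with 1 by lra. auto.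
   intros T HT. destruct (lift_lc c g1 g2 C1 C2 F1 F2 (1 - T) ltac:(lra)) as [de [Hde Hl]].
   exists de. split; auto. intros s Hs Hst. apply Hl. lra.
   replace (1 - s - (1 - T)) with (- (s - T)) by ring. rewrite Rabs_Ropp. auto. }
 specialize (K 1 ltac:(lra)). replace (1 - 1) with 0 in K by ring. auto.
Qed.

Lemma lift_fst (c : R -> X * Y) gm (x0 : X) :
  cont_upto dZ 1 gm -> (forall t, 0 <= t <= 1 -> F (gm t) = c t) ->
  (forall t, 0 <= t <= 1 -> fst (c t) = f x0) -> fst (gm 0) = x0 ->
  forall t, 0 <= t <= 1 -> fst (gm t) = x0.
Proof. intros Cg Fg Hc H0. apply cont_ind_lc; auto.
 intros T HT. destruct (Cg T HT deltaf (s_deltaf H)) as [de [Hde D]].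
 exists de. split; auto. intros s Hs Hst.
 assert (E : fst (gm s) = fst (gm T)).
 { specialize (D s Hs ltac:(rewrite Rabs_minus_sym; auto)).
   unfold prod_dist in D. pose proof (md_nonneg _ (sY_metric H) (snd (gm T)) (snd (gm s))).
   pose proof (s_expanding H (fst (gm T)) (fst (gm s)) ltac:(lra)).
   assert (Ef : f (fst (gm T)) = f (fst (gm s))).
   { pose proof (Fg T HT) as A1. pose proof (Fg s Hs) as A2.
     apply (f_equal fst) in A1. apply (f_equal fst) in A2. simpl in A1, A2.
     rewrite A1, A2, Hc, Hc; auto. }
   rewrite Ef, (md_refl _ (sX_metric H)) in H2.
   pose proof (md_nonneg _ (sX_metric H) (fst (gm T)) (fst (gm s))). pose proof (s_gamma H).
   symmetry. apply (md_eq _ (sX_metric H)). nra. }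
 rewrite E. tauto.
Qed.

Lemma lift_dist (c : R -> X * Y) gm (Lam D : R) :
  0 <= Lam -> 0 <= D ->
  cont_upto dZ 1 gm -> (forall t, 0 <= t <= 1 -> F (gm t) = c t) ->
  (forall s t, 0 <= s <= 1 -> 0 <= t <= 1 -> dZ (c s) (c t) <= D * Rabs (s - t)) ->
  (forall t, 0 <= t <= 1 -> Lz (gm t) <= Lam) ->
  dZ (gm 0) (gm 1) <= Lam * D.
Proof. intros HL HD Cg Fg Hc HLz.
 assert (K : forall s, 0 <= s <= 1 -> dZ (gm 0) (gm s) <= Lam * D * s).
 { apply cont_ind_pt. rewrite (md_refl _ (Zm H)). lra.
   intros T HT. destruct (sL_branch H (gm T)) as [U [HUo [HUz [_ HUl]]]].
   destruct (HUo _ HUz) as [r [Hr Hb]].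
   destruct (Cg T HT r Hr) as [de [Hde D1]]. exists de. split; auto.
   intros t' Ht' Ht'2 Good s Hs Hst.
   destruct (Rle_dec s t') as [Hle|Hgt]. apply Good; lra.
   assert (Ut : U (gm t')). { apply Hb, D1. lra. apply Rabs_def1; lra. }
   assert (Us : U (gm s)). { apply Hb, D1. lra. rewrite Rabs_minus_sym. auto. }
   pose proof (HUl _ _ Ut Us). rewrite Fg, Fg in H0 by lra.
   pose proof (Hc t' s ltac:(lra) Hs). rewrite Rabs_minus_sym, Rabs_right in H1 by lra.
   pose proof (md_nonneg _ (Zm H) (c t') (c s)).
   assert (Lz (gm T) * dZ (c t') (c s) <= Lam * dZ (c t') (c s)) by (apply Rmult_le_compat_r; auto).
   assert (Lam * dZ (c t') (c s) <= Lam * (D * (s - t'))) by (apply Rmult_le_compat_l; auto).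
   pose proof (Good t' ltac:(lra)).
   pose proof (md_tri _ (Zm H) (gm 0) (gm t') (gm s)). nra. }
 specialize (K 1 ltac:(lra)). lra.
Qed.

End Lift2.

Section Pair.
Context {X Y : Type} {dX : X -> X -> R} {dY : Y -> Y -> R}
  {f : X -> X} {g : X -> Y -> Y} {d : nat} {preim : X -> Y -> list Y}
  {Lz : X * Y -> R} {gamma deltaf Lc : R} {A : X * Y -> Prop}
  {N : nat} {Ucov : nat -> X * Y -> Prop} {q : nat} {Aidx : list nat}
  {alpha : R} {phi : X * Y -> R} {eps : R}
  (H : Setting dX dY f g d preim Lz gamma deltaf Lc A N Ucov q Aidx alpha phi eps).

Local Notation dZ := (prod_dist dX dY).
Local Notation F := (skewF f g).

Lemma pairing (x : X) (y y' : Y) : exists (sig : Y -> Y) (l : list Y),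
  (forall a, In a (preim x y) -> In (sig a) (preim x y')) /\
  (forall a b, In a (preim x y) -> In b (preim x y) -> sig a = sig b -> a = b) /\
  NoDup l /\ incl l (preim x y) /\ (length l <= q)%nat /\
  (forall a, In a (preim x y) -> dY a (sig a) <= Lc * dY y y') /\
  (forall a, In a (preim x y) -> ~ In a l -> dY a (sig a) <= / gamma * dY y y').
Proof.
 pose proof (sX_metric H) as HX. pose proof (sY_metric H) as HY.
 pose proof (s_gamma H) as Hg. pose proof (s_Lc H) as HLc.
 destruct (sY_geodesic H y y') as [cY [HcY [Hc0 Hc1]]].
 set (c := fun t => (f x, cY t)).
 set (D := dY y y').
 assert (HD : 0 <= D) by apply (md_nonneg _ HY).
 assert (Hcd : forall s t, in01 s -> in01 t -> dZ (c s) (c t) = Rabs (s - t) * D).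
 { intros s t Hs Ht. unfold c, prod_dist; simpl. rewrite (md_refl _ HX), HcY by auto.
   rewrite Hc0, Hc1. unfold D. ring. }
 assert (Hcg : min_geodesic dZ c).
 { intros s t Hs Ht. rewrite Hcd by auto. rewrite (Hcd 0 1). replace (Rabs (0 - 1)) with 1. ring. rewrite Rabs_minus_sym, Rminus_0_r, Rabs_R1; ring.
   split; lra. split; lra. }
 assert (Hcb : forall s t, 0 <= s <= 1 -> 0 <= t <= 1 -> dZ (c s) (c t) <= D * Rabs (s - t)).
 { intros s t Hs Ht. rewrite Hcd by auto. lra. }
 set (P := preim x y).
 destruct (s_preim H x y) as [HPnd [HPlen HPin]].
 destruct (s_preim H x y') as [HPnd' [HPlen' HPin']].
 assert (Hl : forall a, exists gm, In a P -> gm 0 = (x, a) /\ cont_upto dZ 1 gm /\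
            forall t, 0 <= t <= 1 -> F (gm t) = c t).
 { intros a. destruct (classic (In a P)) as [Ha|Ha].
   - assert (F (x, a) = c 0). { unfold skewF, c; simpl. rewrite Hc0. f_equal. apply HPin. exact Ha. }
     destruct (lift_exists H c D HD Hcb (x, a) H0) as [gm Hgm]. exists gm. auto.
   - exists (fun _ => (x, a)). intro; contradiction. }
 destruct (choice_fun _ Hl) as [lift Hlift].
 assert (Hfst : forall a, In a P -> forall t, 0 <= t <= 1 -> fst (lift a t) = x).
 { intros a Ha. destruct (Hlift a Ha) as [L0 [LC LF]].
   apply (lift_fst H c); auto. rewrite L0; reflexivity. }
 assert (Heta : forall a, In a P -> forall t, 0 <= t <= 1 -> lift a t = (x, snd (lift a t))).
 { intros a Ha t Ht. rewrite <- (Hfst a Ha t Ht). destruct (lift a t); reflexivity. }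
 exists (fun a => snd (lift a 1)).
 set (TA := fun a => exists t, 0 <= t <= 1 /\ A (lift a t)).
 set (l := filter (fun a => if excluded_middle_informative (TA a) then true else false) P).
 assert (Hinl : forall a, In a l <-> In a P /\ TA a).
 { intros a. unfold l. rewrite filter_In. destruct (excluded_middle_informative (TA a)); intuition congruence. }
 exists l.
 assert (Hdist : forall a, In a P -> dY a (snd (lift a 1)) = dZ (lift a 0) (lift a 1)).
 { intros a Ha. rewrite (Heta a Ha 0), (Heta a Ha 1) by lra. unfold prod_dist; simpl.
   rewrite (md_refl _ HX). destruct (Hlift a Ha) as [L0 _]. rewrite L0. simpl. ring. }
 assert (Hinvg : 0 < / gamma) by (apply Rinv_0_lt_compat; lra).
 assert (Hinvg1 : / gamma < 1). { rewrite <- Rinv_1. apply Rinv_lt_contravar; lra. }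
 split; [|split; [|split; [|split; [|split; [|split]]]]].
 - intros a Ha. apply HPin'. destruct (Hlift a Ha) as [_ [_ LF]].
   pose proof (LF 1 ltac:(lra)). rewrite (Heta a Ha 1) in H0 by lra.
   unfold skewF, c in H0; simpl in H0. inversion H0. rewrite Hc1 in *. auto.
 - intros a b Ha Hb E. destruct (Hlift a Ha) as [La0 [LaC LaF]]. destruct (Hlift b Hb) as [Lb0 [LbC LbF]].
   assert (lift a 1 = lift b 1). { rewrite (Heta a Ha 1), (Heta b Hb 1), E by lra. reflexivity. }
   pose proof (lift_unique_end H c _ _ LaC LbC LaF LbF H0). rewrite La0, Lb0 in H1. inversion H1. auto.
 - apply NoDup_filter. exact HPnd.
 - intros a Ha. apply Hinl in Ha. tauto.
 - assert (Hix : forall a, exists i, TA a -> In i Aidx /\ exists t, 0 <= t <= 1 /\ Ucov i (lift a t)).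
   { intros a. destruct (classic (TA a)) as [[t [Ht HA]]|Hn].
     - destruct (s_A_cov H _ HA) as [i [Hi HU]]. exists i. intros _. split; eauto.
     - exists 0%nat. intro; contradiction. }
   destruct (choice_fun _ Hix) as [idx Hidx].
   destruct (s_Aidx H) as [HAnd [HAlen HAlt]].
   rewrite <- HAlen. rewrite <- (length_map idx l). apply NoDup_incl_length.
   + apply FinFun.Injective_map_NoDup_in.
     * intros a b Ha Hb E. apply Hinl in Ha. apply Hinl in Hb.
       destruct Ha as [Ha Ta]. destruct Hb as [Hb Tb].
       destruct (Hidx a Ta) as [Ia [ta [Hta Ua]]]. destruct (Hidx b Tb) as [Ib [tb [Htb Ub]]].
       destruct (Hlift a Ha) as [La0 [LaC LaF]]. destruct (Hlift b Hb) as [Lb0 [LbC LbF]].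
       rewrite <- E in Ub. assert (K := s_geod_lift H (HAlt _ Ia) Hcg
         (conj LaC LaF) (conj LbC LbF) (ex_intro _ ta (conj Hta Ua))
         (ex_intro _ tb (conj Htb Ub)) (conj (Rle_refl 0) Rle_0_1)).
       rewrite La0, Lb0 in K. inversion K. auto.
     * apply NoDup_filter. exact HPnd.
   + intros i Hi. apply in_map_iff in Hi. destruct Hi as [a [<- Ha]]. apply Hinl in Ha.
     destruct Ha as [_ Ta]. apply (Hidx a Ta).
 - intros a Ha. rewrite Hdist by auto. destruct (Hlift a Ha) as [La0 [LaC LaF]].
   apply (lift_dist H c); auto; try lra.
   intros t Ht. destruct (classic (A (lift a t))) as [HA|HA].
   apply (s_A1_in H); auto. pose proof (s_A1_out H _ HA). lra.
 - intros a Ha Hnl. rewrite Hdist by auto. destruct (Hlift a Ha) as [La0 [LaC LaF]].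
   apply (lift_dist H c); auto; try lra.
   intros t Ht. destruct (classic (A (lift a t))) as [HA|HA].
   exfalso. apply Hnl. apply Hinl. split; auto. exists t; auto.
   pose proof (s_A1_out H _ HA). lra.
Qed.

End Pair.

Definition sumL (l : list R) : R := fold_right Rplus 0 l.

Lemma fold_sumL {T} (h : T -> R) l : fold_right (fun a acc => h a + acc) 0 l = sumL (map h l).
Proof. induction l; simpl; auto. rewrite IHl. reflexivity. Qed.

Lemma sumL_perm l1 l2 : Permutation l1 l2 -> sumL l1 = sumL l2.
Proof. induction 1; unfold sumL in *; simpl; try lra. Qed.

Lemma sumL_le {T} (h1 h2 : T -> R) l : (forall a, In a l -> h1 a <= h2 a) ->
  sumL (map h1 l) <= sumL (map h2 l).
Proof. induction l; simpl; intros Hl. lra. fold (sumL (map h1 l)) (sumL (map h2 l)).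
 pose proof (Hl a (or_introl eq_refl)). pose proof (IHl (fun b Hb => Hl b (or_intror Hb))). lra. Qed.

Lemma sumL_abs {T} (h1 h2 : T -> R) l :
  Rabs (sumL (map h1 l) - sumL (map h2 l)) <= sumL (map (fun a => Rabs (h1 a - h2 a)) l).
Proof. induction l; simpl. rewrite Rminus_0_r, Rabs_R0. lra.
 fold (sumL (map h1 l)) (sumL (map h2 l)) (sumL (map (fun a => Rabs (h1 a - h2 a)) l)).
 replace (h1 a + sumL (map h1 l) - (h2 a + sumL (map h2 l))) with
   ((h1 a - h2 a) + (sumL (map h1 l) - sumL (map h2 l))) by ring.
 pose proof (Rabs_triang (h1 a - h2 a) (sumL (map h1 l) - sumL (map h2 l))). lra. Qed.

Lemma sumL_const {T} (c : R) (l : list T) : sumL (map (fun _ => c) l) = INR (length l) * c.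
Proof. induction l. simpl; ring. change (length (a::l)) with (S (length l)). rewrite S_INR.
 change (sumL (map (fun _ => c) (a :: l))) with (c + sumL (map (fun _ => c) l)). rewrite IHl. ring. Qed.

Lemma sumL_plus {T} (h1 h2 : T -> R) l : sumL (map (fun a => h1 a + h2 a) l) = sumL (map h1 l) + sumL (map h2 l).
Proof. induction l; simpl. ring. fold (sumL (map h1 l)) (sumL (map h2 l)) (sumL (map (fun a => h1 a + h2 a) l)).
 rewrite IHl. ring. Qed.

Lemma sumL_scal {T} (c : R) (h : T -> R) l : sumL (map (fun a => c * h a) l) = c * sumL (map h l).
Proof. induction l; simpl. ring. fold (sumL (map h l)) (sumL (map (fun a => c * h a) l)).
 rewrite IHl. ring. Qed.

Definition ind {T} (l : list T) (a : T) : R := if excluded_middle_informative (In a l) then 1 else 0.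

Lemma sumL_ind {T} (l P : list T) : NoDup P -> sumL (map (ind l) P) <= INR (length l).
Proof. intros HP.
 assert (E : sumL (map (ind l) P) = INR (length (filter (fun a => if excluded_middle_informative (In a l) then true else false) P))).
 { clear HP. induction P as [|a P IHP]; [reflexivity|].
   change (sumL (map (ind l) (a :: P))) with (ind l a + sumL (map (ind l) P)). rewrite IHP. unfold ind.
   cbn [filter]. destruct (excluded_middle_informative (In a l)); cbn [length]; [rewrite S_INR|]; ring. }
 rewrite E. apply le_INR. apply NoDup_incl_length. apply NoDup_filter; auto.
 intros a Ha. apply filter_In in Ha. destruct Ha as [_ Ha]. destruct (excluded_middle_informative (In a l)); auto; discriminate.
Qed.

Lemma count_bound {T} (w : T -> R) (P l : list T) (a0 b : R) (q : nat) :
  NoDup P -> (length l <= q)%nat -> (q <= length P)%nat -> a0 <= b ->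
  (forall a, In a P -> w a <= b) -> (forall a, In a P -> ~ In a l -> w a <= a0) ->
  sumL (map w P) <= (INR (length P) - INR q) * a0 + INR q * b.
Proof. intros HP Hl Hq Hab Hb Ha.
 assert (sumL (map w P) <= sumL (map (fun a => a0 + (b - a0) * ind l a) P)).
 { apply sumL_le. intros a HaP. unfold ind. destruct (excluded_middle_informative (In a l)).
   - specialize (Hb a HaP). lra.
   - specialize (Ha a HaP n). lra. }
 rewrite sumL_plus, sumL_const, sumL_scal in H.
 pose proof (sumL_ind l P HP). assert (INR (length l) <= INR q) by (apply le_INR; auto).
 assert ((b - a0) * sumL (map (ind l) P) <= (b - a0) * INR q). { apply Rmult_le_compat_l; lra. }
 lra.
Qed.

Section Cone.
Context {T : Type} (dist : T -> T -> R) (Hm : metric_space dist) (Hc : compact_space dist)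
  (alpha : R) (Ha : 0 < alpha).

Lemma cone_facts K psi (y0 : T) : 0 <= K -> (forall y, 0 < psi y) ->
  Rbar_le (holder_semi dist alpha psi) (Rbar_mult (Finite K) (inf_fun psi)) ->
  inf_fun psi = Finite (real (inf_fun psi)) /\ (forall y, real (inf_fun psi) <= psi y) /\
  0 < real (inf_fun psi) /\
  (forall a b, Rabs (psi a - psi b) <= K * real (inf_fun psi) * rpow (dist a b) alpha) /\
  (forall b, psi b <= real (inf_fun psi) * (1 + K * rpow (diam dist) alpha)).
Proof. intros HK Hp Hs.
 destruct (glb_fin (fun r => exists z, r = psi z) (psi y0) 0) as [E1 [E2 E3]].
 eauto. intros r [z ->]. left; auto.
 unfold inf_fun in *. set (m := real (Glb_Rbar (fun r => exists z, r = psi z))) in *.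
 rewrite E1 in Hs. simpl in Hs.
 assert (Hh := holder_semi_bound dist Hm alpha psi (K * m) Hs).
 assert (Hm0 : 0 <= m) by (apply E3; intros r [z ->]; left; auto).
 destruct (diam_prop dist Hm Hc y0) as [HD0 HD].
 assert (Hup : forall b, psi b <= m * (1 + K * rpow (diam dist) alpha)).
 { intros b. assert (psi b - K * m * rpow (diam dist) alpha <= m).
   { apply E3. intros r [a ->]. specialize (Hh b a). apply Rabs_le_between in Hh.
     assert (rpow (dist b a) alpha <= rpow (diam dist) alpha).
     { apply rpow_le; [split; [apply (md_nonneg _ Hm)|apply HD]|lra]. }
     assert (K * m * rpow (dist b a) alpha <= K * m * rpow (diam dist) alpha).
     { apply Rmult_le_compat_l; auto. apply Rmult_le_pos; auto. }
     lra. }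
   lra. }
 split; [auto|split; [intros y; apply E2; eauto|split; [|split; auto]]].
 destruct Hm0 as [Hm0|Hm0]; auto. exfalso. specialize (Hup y0). rewrite <- Hm0 in Hup.
 specialize (Hp y0). lra.
Qed.

Lemma cone_intro K h m0 (y0 : T) : 0 <= K -> (forall y, m0 <= h y) -> (forall y, 0 < h y) ->
  (forall a b, a <> b -> Rabs (h a - h b) <= K * m0 * rpow (dist a b) alpha) ->
  cone dist alpha K h.
Proof. intros HK Hm0 Hp Hh. left. split; auto. split.
 - exists (K * m0). auto.
 - destruct (glb_fin (fun r => exists z, r = h z) (h y0) m0) as [E1 [E2 E3]].
   eauto. intros r [z ->]; auto.
   unfold inf_fun. rewrite E1. simpl. apply holder_semi_le; auto.
   intros a b Hab. specialize (Hh a b Hab).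
   assert (m0 <= real (Glb_Rbar (fun r => exists z, r = h z))) by (apply E3; intros r [z ->]; auto).
   assert (K * m0 * rpow (dist a b) alpha <= K * real (Glb_Rbar (fun r => exists z, r = h z)) * rpow (dist a b) alpha).
   { apply Rmult_le_compat_r. apply rpow_nonneg. apply Rmult_le_compat_l; auto. }
   lra.
Qed.


Lemma cone_nonneg K h : cone dist alpha K h -> forall y, 0 <= h y.
Proof. intros [[Hp _]|Hz] y. left; auto. rewrite Hz; lra. Qed.

Lemma hilbert_bound K z phi1 phi2 (y0 : T) : 0 < K -> 0 < z < 1 ->
  (forall y, 0 < phi1 y) -> (forall y, 0 < phi2 y) ->
  Rbar_le (holder_semi dist alpha phi1) (Rbar_mult (Finite (z * K)) (inf_fun phi1)) ->
  Rbar_le (holder_semi dist alpha phi2) (Rbar_mult (Finite (z * K)) (inf_fun phi2)) ->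
  Rbar_le (hilbert_theta (cone dist alpha K) phi1 phi2)
    (Finite (ln ((1 + z * K * rpow (diam dist) alpha) ^ 2 / ((1 - z) / (1 + z)) ^ 2))).
Proof. intros HK Hz P1 P2 S1 S2.
 assert (HzK : 0 <= z * K) by nra.
 destruct (cone_facts (z*K) phi1 y0 HzK P1 S1) as [_ [B1 [M1 [H1 U1]]]].
 destruct (cone_facts (z*K) phi2 y0 HzK P2 S2) as [_ [B2 [M2 [H2 U2]]]].
 set (m1 := real (inf_fun phi1)) in *. set (m2 := real (inf_fun phi2)) in *.
 set (c := 1 + z * K * rpow (diam dist) alpha) in *.
 assert (Hc1 : 1 <= c). { unfold c. pose proof (rpow_nonneg (diam dist) alpha). nra. }
 set (tau := (1 - z) / (1 + z)).
 assert (Htau : 0 < tau < 1). { unfold tau. split. apply Rdiv_lt_0_compat; lra.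
   apply Rmult_lt_reg_r with (1 + z). lra. unfold Rdiv. rewrite Rmult_assoc, Rinv_l by lra. lra. }
 assert (Hzt : z * (1 + tau) = 1 - tau). { unfold tau. field. lra. }
 set (tA := tau * m2 / (c * m1)). set (tB := c * m2 / (tau * m1)).
 assert (HtA : 0 < tA). { unfold tA. apply Rdiv_lt_0_compat; nra. }
 assert (HtB : 0 < tB). { unfold tB. apply Rdiv_lt_0_compat; nra. }
 assert (EA : tA * m1 * c = tau * m2). { unfold tA. field. split; lra. }
 assert (EB : tau * tB * m1 = c * m2). { unfold tB. field. split; lra. }
 assert (CA : cone dist alpha K (fun y => phi2 y - tA * phi1 y)).
 { apply (cone_intro K _ ((1 - tau) * m2) y0). lra.
   - intros y. specialize (U1 y). specialize (B2 y).
     assert (tA * phi1 y <= tA * (m1 * c)) by (apply Rmult_le_compat_l; lra). nra.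
   - intros y. specialize (U1 y). specialize (B2 y).
     assert (tA * phi1 y <= tA * (m1 * c)) by (apply Rmult_le_compat_l; lra). nra.
   - intros a b _. specialize (H1 a b). specialize (H2 a b).
     pose proof (rpow_nonneg (dist a b) alpha) as Hr. set (r := rpow (dist a b) alpha) in *.
     replace (phi2 a - tA * phi1 a - (phi2 b - tA * phi1 b)) with ((phi2 a - phi2 b) - tA * (phi1 a - phi1 b)) by ring.
     pose proof (Rabs_triang (phi2 a - phi2 b) (- (tA * (phi1 a - phi1 b)))).
     rewrite Rabs_Ropp, Rabs_mult, (Rabs_right tA) in H by lra.
     assert (tA * Rabs (phi1 a - phi1 b) <= tA * (z * K * m1 * r)) by (apply Rmult_le_compat_l; lra).
     assert (tA * m1 <= tau * m2). { rewrite <- EA. assert (0 <= tA * m1) by nra. nra. }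
     assert (z * K * r * (tA * m1) <= z * K * r * (tau * m2)) by (apply Rmult_le_compat_l; nra).
     replace (K * ((1 - tau) * m2) * r) with (z * K * m2 * r + z * K * r * (tau * m2)).
     unfold Rminus in *. nra.
     rewrite <- Hzt. ring. }
 assert (CB : cone dist alpha K (fun y => tB * phi1 y - phi2 y)).
 { apply (cone_intro K _ ((1 - tau) * tB * m1) y0). lra.
   - intros y. specialize (B1 y). specialize (U2 y).
     assert (tB * m1 <= tB * phi1 y) by (apply Rmult_le_compat_l; lra). nra.
   - intros y. specialize (B1 y). specialize (U2 y).
     assert (tB * m1 <= tB * phi1 y) by (apply Rmult_le_compat_l; lra).
     assert (0 < (1 - tau) * tB * m1). { apply Rmult_lt_0_compat; nra. } nra.
   - intros a b _. specialize (H1 a b). specialize (H2 a b).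
     pose proof (rpow_nonneg (dist a b) alpha) as Hr. set (r := rpow (dist a b) alpha) in *.
     replace (tB * phi1 a - phi2 a - (tB * phi1 b - phi2 b)) with (tB * (phi1 a - phi1 b) - (phi2 a - phi2 b)) by ring.
     pose proof (Rabs_triang (tB * (phi1 a - phi1 b)) (- (phi2 a - phi2 b))).
     rewrite Rabs_Ropp, Rabs_mult, (Rabs_right tB) in H by lra.
     assert (tB * Rabs (phi1 a - phi1 b) <= tB * (z * K * m1 * r)) by (apply Rmult_le_compat_l; lra).
     assert (m2 <= tau * tB * m1) by (rewrite EB; nra).
     assert (z * K * r * m2 <= z * K * r * (tau * tB * m1)) by (apply Rmult_le_compat_l; nra).
     replace (K * ((1 - tau) * tB * m1) * r) with (z * K * r * (tB * m1) + z * K * r * (tau * tB * m1)).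
     unfold Rminus in *. nra.
     rewrite <- Hzt. ring. }
 destruct (lub_fin (fun t => 0 < t /\ cone_le (cone dist alpha K) (fun y => t * phi1 y) phi2) tA (phi2 y0 / phi1 y0))
   as [EA1 [EA2 _]].
 { split; auto. left. exact CA. }
 { intros t [Ht Hle]. assert (t * phi1 y0 <= phi2 y0).
   { destruct Hle as [Hle|Hle]. pose proof (cone_nonneg K _ Hle y0). simpl in H. lra.
     specialize (Hle y0). lra. }
   specialize (P1 y0). apply Rmult_le_reg_r with (phi1 y0); auto. unfold Rdiv. rewrite Rmult_assoc, Rinv_l; lra. }
 destruct (glb_fin (fun t => 0 < t /\ cone_le (cone dist alpha K) phi2 (fun y => t * phi1 y)) tB (phi2 y0 / phi1 y0))
   as [EB1 [EB2 EB3]].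
 { split; auto. left. exact CB. }
 { intros t [Ht Hle]. assert (phi2 y0 <= t * phi1 y0).
   { destruct Hle as [Hle|Hle]. pose proof (cone_nonneg K _ Hle y0). simpl in H. lra.
     specialize (Hle y0). lra. }
   specialize (P1 y0). apply Rmult_le_reg_r with (phi1 y0); auto. unfold Rdiv. rewrite Rmult_assoc, Rinv_l; lra. }
 assert (Hb0 : 0 < phi2 y0 / phi1 y0) by (apply Rdiv_lt_0_compat; auto).
 unfold hilbert_theta, hA, hB. rewrite EA1, EB1.
 set (a := real (Lub_Rbar (fun t => 0 < t /\ cone_le (cone dist alpha K) (fun y => t * phi1 y) phi2))) in *.
 set (b := real (Glb_Rbar (fun t => 0 < t /\ cone_le (cone dist alpha K) phi2 (fun y => t * phi1 y)))) in *.
 assert (Ha1 : tA <= a). { apply EA2. split; auto. left. exact CA. }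
 assert (Hb1 : b <= tB). { apply EB2. split; auto. left. exact CB. }
 assert (Hb2 : phi2 y0 / phi1 y0 <= b).
 { apply EB3. intros t [Ht Hle]. assert (phi2 y0 <= t * phi1 y0).
   { destruct Hle as [Hle|Hle]. pose proof (cone_nonneg K _ Hle y0). simpl in H. lra.
     specialize (Hle y0). lra. }
   specialize (P1 y0). apply Rmult_le_reg_r with (phi1 y0); auto. unfold Rdiv. rewrite Rmult_assoc, Rinv_l; lra. }
 destruct (Rlt_dec 0 a); [|lra]. destruct (Rlt_dec 0 b); [|lra]. simpl.
 apply ln_le. apply Rdiv_lt_0_compat; lra.
 assert (b / a <= tB / tA).
 { apply Rle_trans with (tB / a). unfold Rdiv. apply Rmult_le_compat_r. left; apply Rinv_0_lt_compat; lra. lra.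
   unfold Rdiv. apply Rmult_le_compat_l. lra. apply Rinv_le_contravar; lra. }
 replace (c * (c * 1) / (tau * (tau * 1))) with (tB / tA). lra.
 unfold tA, tB. field. split; lra.
Qed.

End Cone.

Section Main.
Context {X Y : Type} {dX : X -> X -> R} {dY : Y -> Y -> R}
  {f : X -> X} {g : X -> Y -> Y} {d : nat} {preim : X -> Y -> list Y}
  {Lz : X * Y -> R} {gamma deltaf Lc : R} {A : X * Y -> Prop}
  {N : nat} {Ucov : nat -> X * Y -> Prop} {q : nat} {Aidx : list nat}
  {alpha : R} {phi : X * Y -> R} {eps : R}
  (H : Setting dX dY f g d preim Lz gamma deltaf Lc A N Ucov q Aidx alpha phi eps).

Local Notation dZ := (prod_dist dX dY).

Lemma phi_facts (z0 : X * Y) :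
  (forall z, real (inf_fun phi) <= phi z) /\ (forall z, phi z < real (inf_fun phi) + eps) /\
  (forall z z', Rabs (exp (phi z) - exp (phi z')) <= eps * exp (real (inf_fun phi)) * rpow (dZ z z') alpha).
Proof.
 pose proof (s_P1 H) as P1. pose proof (s_P2 H) as P2.
 assert (Hs : forall z, Rbar_le (phi z) (sup_fun phi)).
 { intros z. apply lub_elem. eauto. }
 assert (Hi : forall z, Rbar_le (inf_fun phi) (phi z)).
 { intros z. apply glb_elem. eauto. }
 destruct (sup_fun phi) as [Ms| |] eqn:ES; [|destruct (inf_fun phi); [simpl in P1; contradiction|specialize (Hi z0); simpl in Hi; contradiction|simpl in P1; contradiction]|
   specialize (Hs z0); simpl in Hs; contradiction].
 destruct (inf_fun phi) as [ms| |] eqn:EI; [|specialize (Hi z0); simpl in Hi; contradiction|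
   simpl in P1; contradiction].
 simpl in P1. simpl. split; [|split].
 - intros z. exact (Hi z).
 - intros z. specialize (Hs z). simpl in Hs. lra.
 - intros z z'. apply (holder_semi_bound dZ (Zm H) alpha (fun z => exp (phi z))).
   apply Rbar_lt_le. exact P2.
Qed.

Lemma Lop_zero x psi : (forall y, psi y = 0) -> forall y, Lop preim phi x psi y = 0.
Proof. intros Hz y. unfold Lop. induction (preim x y); simpl; auto. rewrite IHl, Hz. ring. Qed.

Lemma Lop_sum x psi y : Lop preim phi x psi y = sumL (map (fun a => exp (phi (x, a)) * psi a) (preim x y)).
Proof. unfold Lop. apply (fold_sumL (fun a => exp (phi (x, a)) * psi a)). Qed.

Lemma Lop_lower x psi m y : 0 <= m -> (forall y, m <= psi y) ->
  INR d * (exp (real (inf_fun phi)) * m) <= Lop preim phi x psi y.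
Proof. intros Hm0 Hm. destruct (phi_facts (x, y)) as [F1 _].
 rewrite Lop_sum. destruct (s_preim H x y) as [_ [Hlen _]].
 rewrite <- Hlen, <- sumL_const. apply sumL_le. intros a _.
 apply Rmult_le_compat; auto. left; apply exp_pos.
 destruct (F1 (x, a)) as [Hlt|Heq]; [left; apply exp_increasing; auto|rewrite Heq; lra].
Qed.


Lemma term_est x psi K m (a b : Y) : 0 <= K -> 0 <= m -> (forall y, 0 <= psi y) ->
  (forall a b, Rabs (psi a - psi b) <= K * m * rpow (dY a b) alpha) ->
  (forall b, psi b <= m * (1 + K * rpow (diam dY) alpha)) ->
  Rabs (exp (phi (x, a)) * psi a - exp (phi (x, b)) * psi b) <=
    m * exp (real (inf_fun phi)) * (exp eps * K + eps * (1 + K * rpow (diam dY) alpha)) * rpow (dY a b) alpha.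
Proof. intros HK Hm Hp Hh Hu.
 destruct (phi_facts (x, a)) as [F1 [F2 F3]].
 set (e := exp (real (inf_fun phi))) in *. set (E := exp eps).
 set (R := rpow (diam dY) alpha) in *. set (r := rpow (dY a b) alpha).
 assert (Hr : 0 <= r) by apply rpow_nonneg.
 assert (HR : 0 <= R) by apply rpow_nonneg.
 assert (He : 0 < e) by apply exp_pos.
 assert (HE : 0 < E) by apply exp_pos.
 assert (Hea : exp (phi (x, a)) <= e * E).
 { unfold e, E. rewrite <- exp_plus. left. apply exp_increasing. apply F2. }
 assert (Hd : dZ (x, a) (x, b) = dY a b).
 { unfold prod_dist; simpl. rewrite (md_refl _ (sX_metric H)). ring. }
 specialize (F3 (x, a) (x, b)). rewrite Hd in F3. fold r in F3.
 specialize (Hh a b). fold r in Hh. specialize (Hu b).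
 assert (Hpb := Hp b).
 replace (exp (phi (x, a)) * psi a - exp (phi (x, b)) * psi b) with
   (exp (phi (x, a)) * (psi a - psi b) + psi b * (exp (phi (x, a)) - exp (phi (x, b)))) by ring.
 eapply Rle_trans. apply Rabs_triang. rewrite !Rabs_mult, (Rabs_right (exp _)) by (left; apply exp_pos).
 rewrite (Rabs_right (psi b)) by lra.
 assert (exp (phi (x, a)) * Rabs (psi a - psi b) <= e * E * (K * m * r)).
 { apply Rmult_le_compat; auto. left; apply exp_pos. apply Rabs_pos. }
 assert (psi b * Rabs (exp (phi (x, a)) - exp (phi (x, b))) <= m * (1 + K * R) * (eps * e * r)).
 { apply Rmult_le_compat; auto. apply Rabs_pos. }
 replace (m * e * (E * K + eps * (1 + K * R)) * r) with (e * E * (K * m * r) + m * (1 + K * R) * (eps * e * r)) by ring.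
 lra.
Qed.

Lemma Lop_est x psi K m (y y' : Y) : 0 <= K -> 0 <= m -> (forall y, 0 <= psi y) ->
  (forall a b, Rabs (psi a - psi b) <= K * m * rpow (dY a b) alpha) ->
  (forall b, psi b <= m * (1 + K * rpow (diam dY) alpha)) ->
  1 <= K * rpow (diam dY) alpha ->
  Rabs (Lop preim phi x psi y - Lop preim phi x psi y') <=
    zeta_const dY d q gamma Lc alpha eps * K * (INR d * (exp (real (inf_fun phi)) * m)) * rpow (dY y y') alpha.
Proof. intros HK Hm Hp Hh Hu HKR.
 destruct (pairing H x y y') as [sig [l [S1 [S2 [S3 [S4 [S5 [S6 S7]]]]]]]].
 destruct (s_preim H x y) as [HPnd [HPlen HPin]].
 destruct (s_preim H x y') as [HPnd' [HPlen' HPin']].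
 rewrite !Lop_sum.
 set (term := fun a => exp (phi (x, a)) * psi a).
 assert (Hperm : Permutation (map sig (preim x y)) (preim x y')).
 { apply NoDup_Permutation_bis. apply FinFun.Injective_map_NoDup_in; auto.
   rewrite length_map; lia. intros b Hb. apply in_map_iff in Hb. destruct Hb as [a [<- Ha]]. auto. }
 assert (E1 : sumL (map term (preim x y')) = sumL (map (fun a => term (sig a)) (preim x y))).
 { transitivity (sumL (map term (map sig (preim x y)))).
   symmetry; apply sumL_perm, Permutation_map; exact Hperm. rewrite map_map; reflexivity. }
 fold term. rewrite E1.
 set (Bc := m * exp (real (inf_fun phi)) * (exp eps * K + eps * (1 + K * rpow (diam dY) alpha))).
 eapply Rle_trans. apply sumL_abs.
 eapply Rle_trans. apply (sumL_le _ (fun a => Bc * rpow (dY a (sig a)) alpha)).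
 { intros a _. apply term_est; auto. }
 rewrite sumL_scal.
 set (D0 := dY y y'). set (S1c := (INR d - INR q) * rpow gamma (- alpha) + INR q * rpow Lc alpha).
 pose proof (s_alpha H) as Hal. pose proof (s_gamma H) as Hg. pose proof (s_Lc H) as HLc.
 pose proof (s_q H) as Hq. pose proof (s_eps H) as Heps.
 assert (HD0 : 0 <= D0) by apply (md_nonneg _ (sY_metric H)).
 assert (Hg1 : rpow gamma (- alpha) <= 1).
 { unfold rpow. destruct (Rlt_dec 0 gamma); [|lra]. rewrite <- (Rpower_O gamma) by lra.
   apply Rle_Rpower; lra. }
 assert (HL1 : 1 <= rpow Lc alpha).
 { unfold rpow. destruct (Rlt_dec 0 Lc); [|lra]. rewrite <- (Rpower_O Lc) by lra.
   apply Rle_Rpower; lra. }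
 assert (Hg0 : 0 < rpow gamma (- alpha)) by (apply rpow_pos; lra).
 assert (HR0 : 0 <= rpow D0 alpha) by apply rpow_nonneg.
 assert (Hsum : sumL (map (fun a => rpow (dY a (sig a)) alpha) (preim x y)) <= S1c * rpow D0 alpha).
 { eapply Rle_trans. apply (count_bound _ _ l (rpow gamma (- alpha) * rpow D0 alpha) (rpow Lc alpha * rpow D0 alpha) q); auto.
   - lia.
   - apply Rmult_le_compat_r; lra.
   - intros a Ha. rewrite <- rpow_mul by lra. apply rpow_le; [|lra]. split.
     apply (md_nonneg _ (sY_metric H)). apply S6; auto.
   - intros a Ha Hn. rewrite <- rpow_inv by lra. rewrite <- rpow_mul.
     apply rpow_le; [|lra]. split. apply (md_nonneg _ (sY_metric H)). apply S7; auto.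
     left; apply Rinv_0_lt_compat; lra. lra.
   - rewrite HPlen. unfold S1c. lra. }
 assert (HBc : 0 <= Bc).
 { unfold Bc. pose proof (exp_pos (real (inf_fun phi))). pose proof (exp_pos eps).
   pose proof (rpow_nonneg (diam dY) alpha). apply Rmult_le_pos. apply Rmult_le_pos; lra.
   apply Rplus_le_le_0_compat. nra. nra. }
 eapply Rle_trans. apply Rmult_le_compat_l. exact HBc. exact Hsum.
 set (e := exp (real (inf_fun phi))). set (E := exp eps). set (R := rpow (diam dY) alpha) in *.
 set (s := s_const d q gamma Lc alpha eps).
 assert (Hd0 : 0 < INR d) by (apply lt_0_INR; lia).
 assert (Hs : S1c * E = s * INR d). { unfold s, s_const, S1c, E. field. lra. }
 assert (HE1 : 1 <= E). { unfold E. rewrite <- exp_0. destruct (Rle_lt_dec eps 0). lra. left; apply exp_increasing; lra. }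
 assert (HS1 : 0 <= S1c). { unfold S1c. assert (INR q < INR d) by (apply lt_INR; lia).
   pose proof (pos_INR q). nra. }
 assert (He : 0 < e) by apply exp_pos.
 assert (Hz : zeta_const dY d q gamma Lc alpha eps = s + 2 * s * eps * R) by reflexivity.
 rewrite Hz. unfold Bc. fold e E R.
 assert (Hs0 : 0 <= s). { apply Rmult_le_reg_r with (INR d); auto. rewrite <- Hs. nra. }
 assert (K1 : eps * (1 + K * R) * S1c <= eps * (1 + K * R) * s * INR d).
 { assert (Eq : eps * (1 + K * R) * s * INR d = eps * (1 + K * R) * (S1c * E)) by (rewrite Hs; ring). rewrite Eq.
   assert (0 <= eps * (1 + K * R) * S1c) by (apply Rmult_le_pos; nra). nra. }
 assert (K2 : E * K * S1c = K * s * INR d) by (transitivity (K * (S1c * E)); [ring|rewrite Hs; ring]).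
 assert (K3 : eps * (1 + K * R) * s * INR d <= eps * (2 * K * R) * s * INR d).
 { apply Rmult_le_compat_r. lra. apply Rmult_le_compat_r. lra. apply Rmult_le_compat_l; lra. }
 assert (m * e * ((E * K + eps * (1 + K * R)) * S1c) <= m * e * (K * s * INR d + eps * (2 * K * R) * s * INR d)).
 { apply Rmult_le_compat_l. nra. lra. }
 replace ((s + 2 * s * eps * R) * K * (INR d * (e * m)) * rpow D0 alpha) with
   (m * e * (K * s * INR d + eps * (2 * K * R) * s * INR d) * rpow D0 alpha) by ring.
 replace (m * e * (E * K + eps * (1 + K * R)) * (S1c * rpow D0 alpha)) with
   (m * e * ((E * K + eps * (1 + K * R)) * S1c) * rpow D0 alpha) by ring.
 apply Rmult_le_compat_r; auto.
Qed.

End Main.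

Theorem lemma3p3 (X Y : Type) (dX : X -> X -> R) (dY : Y -> Y -> R)
  (f : X -> X) (g : X -> Y -> Y) (d : nat) (preim : X -> Y -> list Y)
  (Lz : X * Y -> R) (gamma deltaf Lc : R) (A : X * Y -> Prop)
  (N : nat) (Ucov : nat -> X * Y -> Prop) (q : nat) (Aidx : list nat)
  (alpha : R) (phi : X * Y -> R) (eps : R) :
  Setting dX dY f g d preim Lz gamma deltaf Lc A N Ucov q Aidx alpha phi eps ->
  exists K0 : R, forall K : R, 0 < K -> K0 <= K ->
    (forall (x : X) (psi : Y -> R), cone dY alpha K psi ->
       cone dY alpha (zeta_const dY d q gamma Lc alpha eps * K) (Lop preim phi x psi)) /\
    (exists M : R, forall (x : X) (psi1 psi2 : Y -> R),
       cone dY alpha K psi1 -> cone dY alpha K psi2 ->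
       (exists y, Lop preim phi x psi1 y <> 0) ->
       (exists y, Lop preim phi x psi2 y <> 0) ->
       Rbar_le (hilbert_theta (cone dY alpha K) (Lop preim phi x psi1) (Lop preim phi x psi2))
               (Finite M)).
Proof.
 intros H.
 set (RR := rpow (diam dY) alpha).
 set (z := zeta_const dY d q gamma Lc alpha eps).
 pose proof (s_alpha H) as Hal. pose proof (s_gamma H) as Hg. pose proof (s_Lc H) as HLc.
 pose proof (s_q H) as Hq. pose proof (s_eps H) as Heps. pose proof (s_zeta H) as Hz1.
 pose proof (sY_metric H) as HY. pose proof (sY_compact H) as HYc.
 assert (Hs0 : 0 < s_const d q gamma Lc alpha eps).
 { unfold s_const. assert (INR q < INR d) by (apply lt_INR; lia).
   assert (0 < INR d) by (apply lt_0_INR; lia).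
   pose proof (pos_INR q). pose proof (rpow_pos gamma (- alpha) ltac:(lra)).
   pose proof (rpow_nonneg Lc alpha). pose proof (exp_pos eps).
   apply Rdiv_lt_0_compat; auto. apply Rmult_lt_0_compat; auto. nra. }
 assert (Hz0 : 0 < z).
 { unfold z, zeta_const. pose proof (rpow_nonneg (diam dY) alpha).
   assert (0 <= 2 * s_const d q gamma Lc alpha eps * eps * rpow (diam dY) alpha).
   { apply Rmult_le_pos; [apply Rmult_le_pos; [apply Rmult_le_pos|]|]; lra. } lra. }
 exists (if Rlt_dec 0 RR then / RR else 0).
 intros K HK HK0.
 assert (P1 : forall (x : X) (psi : Y -> R), cone dY alpha K psi -> cone dY alpha (z * K) (Lop preim phi x psi)).
 { intros x psi [[Hp [_ Hs]]|Hzero].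
   - destruct (classic (exists y0 : Y, True)) as [[y0 _]|Hne].
     + destruct (cone_facts dY HY HYc alpha ltac:(lra) K psi y0 ltac:(lra) Hp Hs) as [_ [B [Mpos [Hh Hu]]]].
       set (m := real (inf_fun psi)) in *.
       assert (Hd0 : 0 < INR d) by (apply lt_0_INR; lia).
       assert (Hm0 : 0 < INR d * (exp (real (inf_fun phi)) * m)).
       { pose proof (exp_pos (real (inf_fun phi))). apply Rmult_lt_0_compat; auto. nra. }
       apply (cone_intro dY HY alpha (z * K) _ (INR d * (exp (real (inf_fun phi)) * m)) y0).
       * nra.
       * intros y. apply (Lop_lower H). lra. auto.
       * intros y. pose proof (Lop_lower H x psi m y ltac:(lra) B). lra.
       * intros a b Hab. apply (Lop_est H); auto; try lra.
         intros y; left; auto.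
         assert (HR : 0 < RR).
         { destruct (diam_prop dY HY HYc a) as [_ HD]. pose proof (md_pos _ HY _ _ Hab).
           specialize (HD a b). apply rpow_pos. lra. }
         destruct (Rlt_dec 0 RR) as [_|]; [|lra]. fold RR.
         apply Rmult_le_reg_r with (/ RR). apply Rinv_0_lt_compat; auto.
         rewrite Rmult_assoc, Rinv_r by lra. lra.
     + right. intros y. exfalso. apply Hne. eauto.
   - right. apply Lop_zero. auto. }
 split. exact P1.
 exists (ln ((1 + z * K * RR) ^ 2 / ((1 - z) / (1 + z)) ^ 2)).
 intros x psi1 psi2 C1 C2 [y1 N1] [y2 N2].
 destruct (P1 x psi1 C1) as [[Q1 [_ S1]]|Z1]; [|exfalso; apply N1, Z1].
 destruct (P1 x psi2 C2) as [[Q2 [_ S2]]|Z2]; [|exfalso; apply N2, Z2].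
 apply (hilbert_bound dY HY HYc alpha ltac:(lra) K z _ _ y1); auto.
Qed.
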